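(* $\mathfrak{mc}(\beta\omega\setminus\omega,\le_{\mathrm{RK}})=\mathfrak{b}(\beta\omega\setminus\omega,\le_{\mathrm{RK}})=\mathfrak{c}^+$. Moreover, if $\mathfrak{icp}(\beta\omega\setminus\omega,\le_{\mathrm{RK}})$ is defined (i.e. every nonprincipal ultrafilter has an RK-incomparable nonprincipal ultrafilter), then it equals $\mathfrak{c}^+$.
   Context: $\beta\omega\setminus\omega$ is the set of nonprincipal ultrafilters on $\omega$. For ultrafilters $p,q$ on $\omega$, $p\le_{\mathrm{RK}} q$ iff there is $f:\omega\to\omega$ with $p=\{A\subseteq\omega : f^{-1}(A)\in q\}$; this is a preorder and the following definitions apply to it verbatim. For a preorder $(P,\le)$: $F\subseteq P$ is unbounded if for every $p\in P$ there is $q\in F$ with $q\not\le p$, and $\mathfrak{b}(P,\le)$ is the minimal size of an unbounded family; a chain is a set of pairwise comparable elements and $\mathfrak{mc}(P)$ is the minimal size of a maximal (under inclusion) chain; $F$ is an incomparable family if for every $p\in P$ there is $q\in F$ with $p\not\le q$ and $q\not\le p$, and $\mathfrak{icp}(P)$ is the minimal size of such a family. $\mathfrak{c}=2^{\aleph_0}$. *)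

(* Defs.v *)
Definition subset_nat := nat -> Prop.

Definition is_ultrafilter (U : subset_nat -> Prop) : Prop :=
  (forall A B : subset_nat, U A -> (forall n, A n -> B n) -> U B) /\
  (forall A B : subset_nat, U A -> U B -> U (fun n => A n /\ B n)) /\
  ~ U (fun _ => False) /\
  (forall A : subset_nat, U A \/ U (fun n => ~ A n)).

Definition is_nonprincipal (U : subset_nat -> Prop) : Prop :=
  forall A : subset_nat, (exists N, forall n, A n -> n < N) -> ~ U A.

(** the remainder beta omega \ omega *)
Definition NPU : Type :=
  { U : subset_nat -> Prop | is_ultrafilter U /\ is_nonprincipal U }.

Definition uf (p : NPU) : subset_nat -> Prop := proj1_sig p.

Definition RK_le (p q : NPU) : Prop :=
  exists f : nat -> nat, forall A : subset_nat, uf p A <-> uf q (fun n => A (f n)).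

Definition family := NPU -> Prop.

Definition unbounded (F : family) : Prop :=
  forall p, exists q, F q /\ ~ RK_le q p.

Definition chain (C : family) : Prop :=
  forall p q, C p -> C q -> RK_le p q \/ RK_le q p.

Definition maximal_chain (C : family) : Prop :=
  chain C /\ forall D : family, chain D -> (forall p, C p -> D p) -> forall p, D p -> C p.

Definition incomparable_family (F : family) : Prop :=
  forall p, exists q, F q /\ ~ RK_le p q /\ ~ RK_le q p.

Definition icp_defined : Prop := incomparable_family (fun _ => True).

(** |F| <= c : F injects into 2^omega *)
Definition card_le_c (F : family) : Prop :=
  exists g : NPU -> (nat -> bool),
    forall p q, F p -> F q -> g p = g q -> p = q.

(** |F| <= c^+ : F carries a well-order all of whose proper initial segments
    have size <= c *)
Definition card_le_c_plus (F : family) : Prop :=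
  exists R : NPU -> NPU -> Prop,
    (forall p, F p -> ~ R p p) /\
    (forall p q r, F p -> F q -> F r -> R p q -> R q r -> R p r) /\
    (forall p q, F p -> F q -> R p q \/ p = q \/ R q p) /\
    (forall G : family, (forall p, G p -> F p) -> (exists p, G p) ->
        exists m, G m /\ forall p, G p -> ~ R p m) /\
    (forall p, F p -> card_le_c (fun q => F q /\ R q p)).

(** "the minimal size of a family with property P is c^+" *)
Definition min_size_is_c_plus (P : family -> Prop) : Prop :=
  (exists F, P F /\ card_le_c_plus F) /\
  (forall F, P F -> ~ card_le_c F).

(* Main.v *)
Require Import Defs.
From Stdlib Require Import Arith Lia List Classical ClassicalEpsilon FunctionalExtensionality PropExtensionality ProofIrrelevance Cantor.

Section Tower.
Variable Y : Type.
Definition sub (A B : Y -> Prop) := forall y, A y -> B y.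
Definition Un (K : (Y -> Prop) -> Prop) : Y -> Prop := fun y => exists A, K A /\ A y.
Definition chainF (K : (Y -> Prop) -> Prop) := forall A B, K A -> K B -> sub A B \/ sub B A.

Lemma sub_antisym A B : sub A B -> sub B A -> A = B.
Proof. intros H1 H2; apply functional_extensionality; intro y;
  apply propositional_extensionality; split; auto. Qed.

Variable f : (Y -> Prop) -> (Y -> Prop).
Hypothesis f_infl : forall A, sub A (f A).

Definition T (A : Y -> Prop) : Prop :=
  forall C : (Y -> Prop) -> Prop,
    (forall B, C B -> C (f B)) ->
    (forall K, (forall B, K B -> C B) -> chainF K -> C (Un K)) -> C A.

Lemma T_f A : T A -> T (f A).
Proof. intros H C H1 H2. apply H1, H; auto. Qed.
Lemma T_un K : (forall B, K B -> T B) -> chainF K -> T (Un K).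
Proof. intros H Hc C H1 H2. apply H2; auto. intros B HB; apply H; auto. Qed.
Lemma T_ind (C : (Y -> Prop) -> Prop) :
  (forall B, T B -> C B -> C (f B)) ->
  (forall K, (forall B, K B -> T B /\ C B) -> chainF K -> C (Un K)) ->
  forall A, T A -> C A.
Proof.
  intros H1 H2 A HA.
  assert (T A /\ C A) as [_ ?]; auto.
  apply HA.
  - intros B [? ?]; split; [apply T_f; auto | auto].
  - intros K HK Hc; split.
    + apply T_un; auto; intros B HB; apply HK; auto.
    + apply H2; auto.
Qed.

Definition extreme c := T c /\ forall x, T x -> sub x c -> x <> c -> sub (f x) c.

Lemma lem1 c : extreme c -> forall x, T x -> sub x c \/ sub (f c) x.
Proof.
  intros [Tc Ec]. apply T_ind.
  - intros x Tx [H|H].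
    + destruct (classic (x = c)) as [->|Hne].
      * right; intros y Hy; auto.
      * left; apply Ec; auto.
    + right; intros y Hy; apply f_infl; auto.
  - intros K HK Hc.
    destruct (classic (exists A, K A /\ ~ sub A c)) as [[A [KA HA]]|H].
    + right. destruct (HK A KA) as [_ [H|H]]; [contradiction|].
      intros y Hy; exists A; auto.
    + left. intros y [A [KA Ay]].
      destruct (classic (sub A c)) as [H'|H']; auto.
      exfalso; apply H; eauto.
Qed.

Lemma lem2 : forall x, T x -> extreme x.
Proof.
  apply T_ind.
  - intros c Tc Ec. split; [apply T_f; auto|].
    intros x Tx Hs Hne.
    destruct (lem1 c Ec x Tx) as [H|H].
    + destruct (classic (x = c)) as [->|Hne'].
      * intros y Hy; auto.
      * intros y Hy; apply f_infl; apply (proj2 Ec x Tx H Hne'); auto.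
    + exfalso; apply Hne; apply sub_antisym; auto.
  - intros K HK Hc. split.
    + apply T_un; auto; intros B HB; apply HK; auto.
    + intros x Tx Hs Hne.
      destruct (classic (exists c, K c /\ ~ sub (f c) x)) as [[c [Kc Hc']]|Hall].
      * destruct (HK c Kc) as [Tc Ec].
        destruct (lem1 c Ec x Tx) as [H|H]; [|contradiction].
        destruct (classic (x = c)) as [->|Hne'].
        --
           destruct (classic (exists c', K c' /\ ~ sub c' c)) as [[c' [Kc' Hc'']]|Hn].
           ++ destruct (lem1 c Ec c' (proj1 (HK c' Kc'))) as [H'|H']; [contradiction|].
              intros y Hy; exists c'; auto.
           ++ exfalso; apply Hne; apply sub_antisym; auto.
              intros y [A [KA Ay]]. destruct (classic (sub A c)) as [h|h]; [auto|].
              exfalso; apply Hn; eauto.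
        -- intros y Hy; exists c; split; auto. apply (proj2 Ec x Tx H Hne'); auto.
      * exfalso; apply Hne; apply sub_antisym; auto.
        intros y [A [KA Ay]].
        destruct (classic (sub (f A) x)) as [h|h].
        -- apply h, f_infl; auto.
        -- exfalso; apply Hall; eauto.
Qed.

Lemma T_chain : chainF T.
Proof.
  intros x y Tx Ty. destruct (lem1 y (lem2 y Ty) x Tx) as [H|H]; auto.
  right; intros z Hz; apply H, f_infl; auto.
Qed.

Lemma tower_fix : exists U, T U /\ f U = U.
Proof.
  exists (Un T). assert (TU : T (Un T)) by (apply T_un; auto using T_chain).
  split; auto. apply sub_antisym; auto.
  intros y Hy; exists (f (Un T)); split; auto. apply T_f; auto.
Qed.
End Tower.
Section Zorn.
Variable X : Type.
Variable P : X -> Prop.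
Variable le : X -> X -> Prop.
Definition chainP (A : X -> Prop) := (forall x, A x -> P x) /\ (forall x y, A x -> A y -> le x y \/ le y x).

Definition fZ (A : X -> Prop) : X -> Prop :=
  match excluded_middle_informative (exists x, ~ A x /\ chainP (fun y => A y \/ y = x)) with
  | left e => let x := proj1_sig (constructive_indefinite_description _ e) in fun y => A y \/ y = x
  | right _ => A end.

Lemma fZ_infl A : sub X A (fZ A).
Proof. unfold fZ; destruct (excluded_middle_informative _); intros y Hy; auto. Qed.

Lemma fZ_chain A : chainP A -> chainP (fZ A).
Proof. unfold fZ; destruct (excluded_middle_informative _) as [e|]; auto.
  destruct (constructive_indefinite_description _ e) as [x Hx]; simpl; intros _; apply (proj2 Hx). Qed.

Theorem hausdorff : exists U, chainP U /\ forall D, chainP D -> sub X U D -> sub X D U.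
Proof.
  destruct (tower_fix X fZ fZ_infl) as [U [TU HU]].
  assert (CU : chainP U).
  { apply (T_ind X fZ chainP); auto.
    - intros B _ HB; apply fZ_chain; auto.
    - intros K HK Hc; split.
      + intros x [A [KA Ax]]; apply (proj1 (proj2 (HK A KA))); auto.
      + intros x y [A [KA Ax]] [B [KB By]].
        destruct (Hc A B KA KB) as [h|h].
        * apply (proj2 (proj2 (HK B KB))); auto.
        * apply (proj2 (proj2 (HK A KA))); auto. }
  exists U; split; auto.
  intros D CD HUD y Dy. apply NNPP; intro nUy.
  unfold fZ in HU; destruct (excluded_middle_informative _) as [e|n].
  - destruct (constructive_indefinite_description _ e) as [x [nUx Hx]]; simpl in HU.
    apply nUx. rewrite <- HU. auto.
  - apply n. exists y; split; auto. split.
    + intros z [h| ->]; apply (proj1 CD); auto.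
    + intros a b Ha Hb; apply (proj2 CD); destruct Ha as [| ->]; destruct Hb as [| ->]; auto.
Qed.

Hypothesis le_refl : forall x, le x x.
Hypothesis le_trans : forall x y z, le x y -> le y z -> le x z.
Hypothesis ub : forall A, chainP A -> exists m, P m /\ forall x, A x -> le x m.

Theorem zorn : exists m, P m /\ forall x, P x -> le m x -> le x m.
Proof.
  destruct hausdorff as [U [CU MU]].
  destruct (ub U CU) as [m [Pm Hm]].
  exists m; split; auto. intros x Px Hmx.
  apply Hm. apply (MU (fun y => U y \/ y = x)).
  - split.
    + intros z [h| ->]; auto. apply (proj1 CU); auto.
    + intros a b [Ha| ->] [Hb| ->];
      [apply (proj2 CU); auto | left; eauto | right; eauto | left; auto].
  - intros z h; auto.
  - auto.
Qed.
End Zorn.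

Definition pfilter (U : subset_nat -> Prop) :=
  (forall A B : subset_nat, U A -> (forall n, A n -> B n) -> U B) /\
  (forall A B : subset_nat, U A -> U B -> U (fun n => A n /\ B n)) /\
  ~ U (fun _ => False) /\ U (fun _ => True).

Theorem uf_lemma (F0 : subset_nat -> Prop) : pfilter F0 ->
  exists M, pfilter M /\ (forall A, F0 A -> M A) /\ forall A, M A \/ M (fun n => ~ A n).
Proof.
  intro HF0.
  destruct (zorn (subset_nat -> Prop) (fun U => pfilter U /\ forall A, F0 A -> U A)
    (fun U V => forall A, U A -> V A)) as [M [[PM FM] HM]].
  - auto.
  - intros x y z H1 H2 A HA; auto.
  - intros K [HK1 HK2].
    exists (fun B => F0 B \/ exists U, K U /\ U B). split.
    + split; [split; [|split; [|split]]|].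
      * intros A B [h|[U [KU UA]]] Hs.
        -- left; apply (proj1 HF0) with A; auto.
        -- right; exists U; split; auto. apply (proj1 (proj1 (HK1 U KU))) with A; auto.
      * intros A B [h1|[U1 [K1 U1A]]] [h2|[U2 [K2 U2B]]].
        -- left; apply (proj1 (proj2 HF0)); auto.
        -- right; exists U2; split; auto. destruct (HK1 U2 K2) as [[_ [h _]] hF]; auto.
        -- right; exists U1; split; auto. destruct (HK1 U1 K1) as [[_ [h _]] hF]; auto.
        -- destruct (HK2 U1 U2 K1 K2) as [h|h].
           ++ right; exists U2; split; auto. destruct (HK1 U2 K2) as [[_ [h' _]] hF]; auto.
           ++ right; exists U1; split; auto. destruct (HK1 U1 K1) as [[_ [h' _]] hF]; auto.
      * intros [h|[U [KU UF]]].
        -- apply (proj1 (proj2 (proj2 HF0))); auto.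
        -- apply (proj1 (proj2 (proj2 (proj1 (HK1 U KU))))); auto.
      * left; apply HF0.
      * intros A h; left; auto.
    + intros U KU A UA; right; eauto.
  - exists M; split; [auto|split; [auto|]].
    intros A. destruct (classic (M (fun n => ~ A n))) as [h|h]; auto. left.
    destruct PM as [Mup [Mint [MF MT]]].
    apply (HM (fun B => exists C, M C /\ forall n, C n -> A n -> B n)).
    + split; [split; [|split; [|split]]|].
      * intros B B' [C [MC HC]] Hs; exists C; split; auto.
      * intros B B' [C [MC HC]] [C' [MC' HC']]; exists (fun n => C n /\ C' n); split; auto.
        intros n [? ?] ?; split; auto.
      * intros [C [MC HC]]. apply h. apply Mup with C; [auto|]. intros n Cn An; apply (HC n Cn An).
      * exists (fun _ => True); split; auto.
      * intros B FB; exists B; split; auto.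
    + intros B MB; exists B; split; auto.
    + exists (fun _ => True); split; auto.
Qed.

Definition b2n (b : bool) : nat := if b then 1 else 0.
Fixpoint pcode (s : nat -> bool) (n : nat) : nat :=
  match n with 0 => 0 | S n => Cantor.to_nat (b2n (s n), pcode s n) end.

Lemma pcode_eq s s' n : pcode s n = pcode s' n -> forall i, i < n -> s i = s' i.
Proof.
  induction n as [|n IH]; cbn [pcode]; intros H i Hi; [lia|].
  apply (f_equal Cantor.of_nat) in H. rewrite !Cantor.cancel_of_to in H.
  injection H as H1 H2.
  destruct (Nat.eq_dec i n) as [->|Hne].
  - destruct (s n), (s' n); simpl in H1; congruence.
  - apply IH; auto; lia.
Qed.

Fixpoint val (c t : nat) : nat :=
  match t with 0 => fst (Cantor.of_nat c) | S t => val (snd (Cantor.of_nat c)) t end.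
Fixpoint mk (G : nat -> nat) (P : nat) : nat :=
  match P with 0 => 0 | S P => Cantor.to_nat (G 0, mk (fun t => G (S t)) P) end.

Lemma val_mk P : forall G t, t < P -> val (mk G P) t = G t.
Proof.
  induction P as [|P IH]; intros G t Ht; [lia|]. cbn [mk].
  destruct t as [|t]; cbn [val]; rewrite Cantor.cancel_of_to; cbn [fst snd]; auto.
  rewrite IH; auto; lia.
Qed.

Definition fI (s : nat -> bool) (m : nat) : nat :=
  val (snd (Cantor.of_nat m)) (pcode s (fst (Cantor.of_nat m))).

Lemma diff_point (s s' : nat -> bool) : s <> s' -> exists i, s i <> s' i.
Proof. intro H; apply NNPP; intro H'; apply H; apply functional_extensionality; intro i;
  apply NNPP; intro h; apply H'; eauto. Qed.

Lemma sep1 (a : nat -> bool) (L : list (nat -> bool)) : exists N1, forall s', In s' L -> a <> s' -> exists i, i < N1 /\ a i <> s' i.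
Proof.
  induction L as [|b L [N1 IH]]; [exists 0; intros s' []|].
  destruct (classic (a = b)) as [e|ne].
  - exists N1; intros s' [<-|h] hne; [congruence|auto].
  - destruct (diff_point a b ne) as [i Hi].
    exists (N1 + S i); intros s' [<-|h] hne.
    + exists i; split; auto; lia.
    + destruct (IH s' h hne) as [j [? ?]]; exists j; split; auto; lia.
Qed.

Lemma sep (L : list (nat -> bool)) : exists N0, forall s s', In s L -> In s' L -> s <> s' -> exists i, i < N0 /\ s i <> s' i.
Proof.
  induction L as [|a L [N0 IH]]; [exists 0; intros s s' []|].
  destruct (sep1 a L) as [N1 H1].
  exists (N0 + N1). intros s s' [<-|hs] [<-|hs'] hne.
  - congruence.
  - destruct (H1 s' hs' hne) as [i [? ?]]; exists i; split; auto; lia.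
  - destruct (H1 s hs (fun e => hne (eq_sym e))) as [i [? ?]]; exists i; split; auto; lia.
  - destruct (IH s s' hs hs' hne) as [i [? ?]]; exists i; split; auto; lia.
Qed.

Lemma key (L : list (nat -> bool)) (v : (nat -> bool) -> nat) (N : nat) :
  exists m, N <= m /\ forall s, In s L -> fI s m = v s.
Proof.
  destruct (sep L) as [N0 HN0].
  set (n := N + N0).
  set (G := fun t => match find (fun s => Nat.eqb (pcode s n) t) L with Some s => v s | None => 0 end).
  set (P := S (list_max (map (fun s => pcode s n) L))).
  exists (Cantor.to_nat (n, mk G P)). split.
  - pose proof (Cantor.to_nat_non_decreasing n (mk G P)). unfold n in *; lia.
  - intros s Hs. unfold fI. rewrite Cantor.cancel_of_to; cbn [fst snd].
    rewrite val_mk.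
    + unfold G. destruct (find (fun s0 => Nat.eqb (pcode s0 n) (pcode s n)) L) as [s'|] eqn:E.
      * apply find_some in E. destruct E as [Hs' E]. apply Nat.eqb_eq in E.
        destruct (classic (s' = s)) as [->|hne]; auto.
        destruct (HN0 s' s Hs' Hs hne) as [i [Hi Hd]].
        exfalso; apply Hd. apply (pcode_eq _ _ n E). unfold n; lia.
      * exfalso. apply find_none with (x := s) in E; auto. rewrite Nat.eqb_refl in E; discriminate.
    + unfold P. apply le_n_S.
      assert (Hf := proj1 (list_max_le (map (fun s => pcode s n) L) _) (le_n _)).
      rewrite Forall_forall in Hf. apply Hf. apply in_map_iff; eauto.
Qed.

Lemma npu_ext (p q : NPU) : (forall A, uf p A <-> uf q A) -> p = q.
Proof.
  destruct p as [p Hp], q as [q Hq]; unfold uf; simpl; intro H.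
  assert (E : p = q).
  { apply functional_extensionality; intro A; apply propositional_extensionality; auto. }
  subst q. f_equal; apply proof_irrelevance.
Qed.

Lemma uf_props (p : NPU) : is_ultrafilter (uf p).
Proof. exact (proj1 (proj2_sig p)). Qed.
Lemma uf_up (p : NPU) A B : uf p A -> (forall n, A n -> B n) -> uf p B.
Proof. apply (proj1 (uf_props p)). Qed.
Lemma uf_int (p : NPU) A B : uf p A -> uf p B -> uf p (fun n => A n /\ B n).
Proof. apply (proj1 (proj2 (uf_props p))). Qed.
Lemma uf_F (p : NPU) : ~ uf p (fun _ => False).
Proof. apply (proj1 (proj2 (proj2 (uf_props p)))). Qed.
Lemma uf_C (p : NPU) A : uf p A \/ uf p (fun n => ~ A n).
Proof. apply (proj2 (proj2 (proj2 (uf_props p)))). Qed.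
Lemma uf_disj (p : NPU) A B : uf p A -> uf p B -> (forall n, A n -> B n -> False) -> False.
Proof. intros HA HB H; apply (uf_F p); apply uf_up with (1 := uf_int p A B HA HB); intros n [? ?]; eauto. Qed.
Lemma uf_T (p : NPU) : uf p (fun _ => True).
Proof. destruct (uf_C p (fun _ => True)) as [h|h]; auto. exfalso; apply (uf_F p); apply uf_up with (1 := h); auto. Qed.
Lemma uf_ne (p : NPU) A : uf p A -> exists n, A n.
Proof. intro h; apply NNPP; intro h'; apply (uf_F p); apply uf_up with (1 := h); intros n Hn; eauto. Qed.

Lemma RK_refl p : RK_le p p.
Proof. exists (fun n => n); intro A; tauto. Qed.
Lemma RK_trans p q r : RK_le p q -> RK_le q r -> RK_le p r.
Proof. intros [f Hf] [g Hg]; exists (fun n => f (g n)); intro A.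
  rewrite Hf. apply (Hg (fun n => A (f n))). Qed.

Lemma choice_fun {A B : Type} (P : A -> B -> Prop) : (forall a, exists b, P a b) -> exists g : A -> B, forall a, P a (g a).
Proof. intro H; exists (fun a => proj1_sig (constructive_indefinite_description _ (H a))).
  intro a; exact (proj2_sig (constructive_indefinite_description _ (H a))). Qed.

Lemma gen_uf (Con : (nat -> bool) -> subset_nat -> Prop) :
  (forall s (L : list ((nat -> bool) * subset_nat)), (forall A, In (s, A) L -> Con s A) ->
      exists n, forall A, In (s, A) L -> A n) ->
  exists q : NPU, forall s A, Con s A -> uf q (fun m => A (fI s m)).
Proof.
  intro HC.
  set (F0 := fun B : subset_nat => exists (L : list ((nat -> bool) * subset_nat)) N,
     (forall sA, In sA L -> Con (fst sA) (snd sA)) /\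
     forall m, N <= m -> (forall sA, In sA L -> snd sA (fI (fst sA) m)) -> B m).
  assert (PF : pfilter F0).
  { split; [|split; [|split]].
    - intros A B [L [N [H1 H2]]] Hs; exists L, N; split; auto.
    - intros A B [L1 [N1 [H1 H2]]] [L2 [N2 [H3 H4]]]; exists (L1 ++ L2), (N1 + N2); split.
      + intros sA h; apply in_app_or in h; destruct h; auto.
      + intros m Hm Hall; split; [apply H2|apply H4]; try lia; intros sA h; apply Hall, in_or_app; auto.
    - intros [L [N [H1 H2]]].
      assert (Hv : exists v : (nat -> bool) -> nat, forall s A, In (s, A) L -> A (v s)).
      { apply (choice_fun (fun s n => forall A, In (s, A) L -> A n)). intro s; apply HC.
        intros A h; apply (H1 (s, A)); auto. }
      destruct Hv as [v Hv].
      destruct (key (map fst L) v N) as [m [Hm Hk]].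
      apply (H2 m Hm). intros [s A] h; simpl. rewrite Hk. apply Hv; auto.
      apply in_map_iff; exists (s, A); auto.
    - exists nil, 0; split; [intros _ []|auto]. }
  destruct (uf_lemma F0 PF) as [M [[Mup [Mint [MF MT]]] [HFM HMC]]].
  assert (Hu : is_ultrafilter M /\ is_nonprincipal M).
  { split; [split; [auto|split; [auto|split; auto]]|].
    intros A [N HN] MA. apply MF.
    assert (MA' : M (fun n => ~ A n)).
    { apply HFM; exists nil, N; split; [intros _ []|]. intros m Hm _ Am; specialize (HN m Am); lia. }
    apply Mup with (1 := Mint _ _ MA MA'); intros n [? ?]; auto. }
  exists (exist _ M Hu). intros s A HA; unfold uf; simpl. apply HFM.
  exists ((s, A) :: nil), 0; split.
  - intros sA [<-|[]]; auto.
  - intros m _ Hall; apply (Hall (s, A)); left; auto.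
Qed.

Lemma uf_list (p : NPU) s (L : list ((nat -> bool) * subset_nat)) :
  (forall A, In (s, A) L -> uf p A) -> uf p (fun n => forall A, In (s, A) L -> A n).
Proof.
  induction L as [|[s' A'] L IH]; intro H.
  - apply uf_up with (1 := uf_T p); intros n _ A [].
  - assert (IH' := IH (fun A h => H A (or_intror h))).
    destruct (classic (s' = s)) as [<-|ne].
    + apply uf_up with (1 := uf_int p _ _ (H A' (or_introl eq_refl)) IH').
      intros n [h1 h2] A [e|h]; [inversion e; subst; auto|apply h2; auto].
    + apply uf_up with (1 := IH'). intros n h A [e|h']; [injection e as e1 e2; congruence|apply h; auto].
Qed.

Lemma upper_bound (F : family) : card_le_c F -> exists q, forall p, F p -> RK_le p q.
Proof.
  intros [g Hg].
  destruct (gen_uf (fun s A => exists p, F p /\ g p = s /\ uf p A)) as [q Hq].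
  - intros s L HL.
    destruct (classic (exists A0, In (s, A0) L)) as [[A0 h0]|hn].
    + destruct (HL A0 h0) as [p0 [Fp0 [gp0 _]]].
      apply (uf_ne p0). apply uf_list. intros A h.
      destruct (HL A h) as [p [Fp [gp up]]].
      rewrite (Hg p p0 Fp Fp0 (eq_trans gp (eq_sym gp0))) in up; auto.
    + exists 0; intros A h; exfalso; eauto.
  - exists q. intros p Fp. exists (fI (g p)). intro A; split.
    + intro h; apply (Hq (g p) A); eauto.
    + intro h. destruct (uf_C p A) as [h'|h']; auto.
      exfalso. apply (uf_disj q _ _ h (Hq (g p) _ (ex_intro _ p (conj Fp (conj eq_refl h'))))).
      auto.
Qed.

Definition enc (h : nat -> nat) (k : nat) : bool :=
  Nat.eqb (h (fst (Cantor.of_nat k))) (snd (Cantor.of_nat k)).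

Lemma enc_inj h h' : enc h = enc h' -> h = h'.
Proof.
  intro E; apply functional_extensionality; intro i.
  assert (E1 := f_equal (fun e => e (Cantor.to_nat (i, h i))) E). cbv beta in E1.
  unfold enc in E1. rewrite Cantor.cancel_of_to in E1. cbn [fst snd] in E1.
  rewrite Nat.eqb_refl in E1. symmetry in E1. apply Nat.eqb_eq in E1. auto.
Qed.

Lemma pred_le_c q : card_le_c (fun p => RK_le p q).
Proof.
  set (fp := fun p : NPU => epsilon (inhabits (fun n : nat => n))
     (fun f => forall A, uf p A <-> uf q (fun n => A (f n)))).
  exists (fun p => enc (fp p)). intros p p' Hp Hp' E.
  apply enc_inj in E.
  assert (S1 := epsilon_spec (inhabits (fun n : nat => n)) _ Hp).
  assert (S2 := epsilon_spec (inhabits (fun n : nat => n)) _ Hp').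
  cbv beta in S1, S2; fold (fp p) in S1; fold (fp p') in S2.
  apply npu_ext; intro A. rewrite S1, S2, E. tauto.
Qed.

Lemma exists_not_below q : exists r, ~ RK_le r q.
Proof.
  destruct (pred_le_c q) as [g Hg].
  set (v := fun u : NPU => if excluded_middle_informative (uf u (fun m => fI (g u) m = 0)) then 1 else 0).
  destruct (gen_uf (fun s A => exists u, RK_le u q /\ g u = s /\ forall n, n = v u -> A n)) as [r Hr].
  - intros s L HL.
    destruct (classic (exists A0, In (s, A0) L)) as [[A0 h0]|hn].
    + destruct (HL A0 h0) as [u0 [Fu0 [gu0 _]]].
      exists (v u0). intros A h.
      destruct (HL A h) as [u [Fu [gu hu]]].
      rewrite (Hg u u0 Fu Fu0 (eq_trans gu (eq_sym gu0))) in hu; auto.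
    + exists 0; intros A h; exfalso; eauto.
  - exists r. intro Hrq.
    assert (H := Hr (g r) (fun n => n = v r) (ex_intro _ r (conj Hrq (conj eq_refl (fun n h => h))))).
    simpl in H. unfold v in H.
    destruct (excluded_middle_informative (uf r (fun m => fI (g r) m = 0))) as [h|h].
    + apply (uf_disj r _ _ h H). intros n -> ; discriminate.
    + apply h; auto.
Qed.

Lemma strict_above q : exists q', RK_le q q' /\ ~ RK_le q' q.
Proof.
  destruct (exists_not_below q) as [r Hr].
  destruct (upper_bound (fun x => x = q \/ x = r)) as [q' Hq'].
  - exists (fun x => fun _ : nat => if excluded_middle_informative (x = q) then true else false).
    intros x y Hx Hy E.
    assert (E' := f_equal (fun e => e 0) E); simpl in E'.
    destruct (excluded_middle_informative (x = q)), (excluded_middle_informative (y = q));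
      try discriminate; try congruence.
    destruct Hx; destruct Hy; congruence.
  - exists q'; split; auto. intro h. apply Hr. apply RK_trans with q'; auto.
Qed.

Section Zermelo.
Variable Y : Type.
Definition XP := ((Y -> Prop) * (Y -> Y -> Prop))%type.
Definition WOP (z : XP) : Prop :=
  (forall x y, snd z x y -> fst z x /\ fst z y) /\ (forall x, ~ snd z x x) /\
  (forall x y w, snd z x y -> snd z y w -> snd z x w) /\
  (forall x y, fst z x -> fst z y -> snd z x y \/ x = y \/ snd z y x) /\
  (forall G : Y -> Prop, (forall x, G x -> fst z x) -> (exists x, G x) ->
     exists m, G m /\ forall x, G x -> ~ snd z x m).
Definition LE (z z' : XP) : Prop :=
  (forall x, fst z x -> fst z' x) /\ (forall x y, fst z x -> fst z y -> (snd z x y <-> snd z' x y)) /\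
  (forall x y, fst z x -> fst z' y -> ~ fst z y -> snd z' x y).

Lemma LE_refl z : LE z z.
Proof. split; [auto|split; [tauto|]]. intros x y _ h h'; contradiction. Qed.
Lemma LE_trans z1 z2 z3 : LE z1 z2 -> LE z2 z3 -> LE z1 z3.
Proof.
  intros [a1 [b1 c1]] [a2 [b2 c2]]; split; [auto|split].
  - intros x y hx hy. rewrite b1, b2; auto; tauto.
  - intros x y hx hy hn. destruct (classic (fst z2 y)) as [h|h].
    + apply b2; auto.
    + apply c2; auto.
Qed.

Section UB.
Variable K : XP -> Prop.
Hypothesis HK : chainP XP WOP LE K.
Definition Dst : Y -> Prop := fun y => exists z, K z /\ fst z y.
Definition Rst : Y -> Y -> Prop := fun x y => exists z, K z /\ snd z x y.

Lemma cmp z1 z2 : K z1 -> K z2 -> LE z1 z2 \/ LE z2 z1.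
Proof. apply (proj2 HK). Qed.
Lemma wop z : K z -> WOP z.
Proof. apply (proj1 HK). Qed.

Lemma claimA z x y : K z -> fst z x -> fst z y -> (Rst x y <-> snd z x y).
Proof.
  intros Kz hx hy; split; [|intro h; exists z; auto].
  intros [z' [Kz' h]]. destruct (cmp z z' Kz Kz') as [[a [b c]]|[a [b c]]].
  - apply b; auto.
  - destruct (proj1 (wop z' Kz') x y h). apply b; auto.
Qed.

Lemma claimB z x y : K z -> fst z x -> Dst y -> ~ fst z y -> Rst x y.
Proof.
  intros Kz hx [z' [Kz' hy]] hn. exists z'; split; auto.
  destruct (cmp z z' Kz Kz') as [[a [b c]]|[a [b c]]].
  - apply c; auto.
  - exfalso; apply hn, a; auto.
Qed.

Lemma common x y : Dst x -> Dst y -> exists z, K z /\ fst z x /\ fst z y.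
Proof.
  intros [z1 [K1 h1]] [z2 [K2 h2]].
  destruct (cmp z1 z2 K1 K2) as [[a _]|[a _]]; [exists z2|exists z1]; auto.
Qed.

Lemma Rst_irr x : ~ Rst x x.
Proof. intros [z [Kz h]]; apply (proj1 (proj2 (wop z Kz)) x h). Qed.

Lemma Rst_field x y : Rst x y -> Dst x /\ Dst y.
Proof. intros [z [Kz h]]; destruct (proj1 (wop z Kz) x y h); split; exists z; auto. Qed.

Lemma Rst_trans x y w : Rst x y -> Rst y w -> Rst x w.
Proof.
  intros h1 h2. destruct (Rst_field x y h1) as [dx dy]. destruct (Rst_field y w h2) as [_ dw].
  destruct (common x y dx dy) as [z1 [K1 [a1 b1]]].
  destruct (common x w dx dw) as [z2 [K2 [a2 b2]]].
  destruct (cmp z1 z2 K1 K2) as [[a _]|[a _]].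
  - apply (claimA z2); auto. apply (proj1 (proj2 (proj2 (wop z2 K2)))) with y;
      [apply (claimA z2) | apply (claimA z2)]; auto.
  - apply (claimA z1); auto. apply (proj1 (proj2 (proj2 (wop z1 K1)))) with y;
      [apply (claimA z1) | apply (claimA z1)]; auto.
Qed.

Lemma ub_WOP : WOP (Dst, Rst).
Proof.
  split; [|split; [|split; [|split]]]; simpl.
  - apply Rst_field.
  - apply Rst_irr.
  - apply Rst_trans.
  - intros x y dx dy. destruct (common x y dx dy) as [z [Kz [a b]]].
    destruct (proj1 (proj2 (proj2 (proj2 (wop z Kz)))) x y a b) as [h|[h|h]].
    + left; exists z; auto.
    + auto.
    + right; right; exists z; auto.
  - intros G HG [g Gg]. destruct (HG g Gg) as [z [Kz hz]].
    destruct (proj2 (proj2 (proj2 (proj2 (wop z Kz)))) (fun x => G x /\ fst z x))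
      as [m [[Gm zm] Hm]]; [tauto|eauto|].
    exists m; split; auto. intros x Gx hxm.
    destruct (classic (fst z x)) as [h|h].
    + apply (Hm x); auto. apply (claimA z); auto.
    + apply (Rst_irr m). apply Rst_trans with x; auto. apply (claimB z); auto.
Qed.

Lemma ub_LE z : K z -> LE z (Dst, Rst).
Proof.
  intro Kz; split; [|split]; simpl.
  - intros x h; exists z; auto.
  - intros x y hx hy; symmetry; apply claimA; auto.
  - intros x y hx hy hn; apply (claimB z); auto.
Qed.
End UB.

Theorem zermelo : exists W : Y -> Y -> Prop,
  (forall x, ~ W x x) /\ (forall x y z, W x y -> W y z -> W x z) /\
  (forall x y, W x y \/ x = y \/ W y x) /\
  (forall G : Y -> Prop, (exists p, G p) -> exists m, G m /\ forall p, G p -> ~ W p m).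
Proof.
  destruct (zorn XP WOP LE LE_refl LE_trans) as [[D R] [PM HM]].
  { intros K HK. exists (Dst K, Rst K); split; [apply ub_WOP; auto|intros z Kz; apply ub_LE; auto]. }
  destruct PM as [Pf [Pi [Pt [Ptot Pl]]]]; simpl in *.
  assert (All : forall y, D y).
  { intro y; apply NNPP; intro ny.
    set (z' := ((fun x => D x \/ x = y), (fun a b => R a b \/ (D a /\ b = y))) : XP).
    assert (P' : WOP z').
    { split; [|split; [|split; [|split]]]; simpl.
      - intros a b [h|[h ->]]; [destruct (Pf a b h); auto|auto].
      - intros x [h|[h ->]]; [apply (Pi x h)|auto].
      - intros a b c [h1|[h1 ->]] [h2|[h2 ->]].
        + left; eauto.
        + right; split; auto. apply (Pf a b h1).
        + destruct (ny (proj1 (Pf y c h2))).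
        + destruct (ny h2).
      - intros a b [ha| ->] [hb| ->].
        + destruct (Ptot a b ha hb) as [h|[h|h]]; auto.
        + left; right; auto.
        + right; right; right; auto.
        + auto.
      - intros G HG Hne.
        destruct (classic (exists x, G x /\ D x)) as [hx|hx].
        + destruct (Pl (fun x => G x /\ D x)) as [m [[Gm Dm] Hm]]; [tauto|auto|].
          exists m; split; auto. intros x Gx [h|[h ->]].
          * apply (Hm x); auto. split; auto. apply (Pf x m h).
          * auto.
        + exists y. destruct Hne as [g Gg].
          assert (g = y) as <-.
          { destruct (HG g Gg) as [h|h]; auto. exfalso; apply hx; eauto. }
          split; auto. intros x Gx [h|[h _]].
          * apply hx; exists x; split; auto. apply (Pf x g h).
          * apply hx; eauto. }
    assert (L' : LE (D, R) z').
    { split; [|split]; simpl.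
      - auto.
      - intros a b ha hb; split; [auto|intros [h|[h ->]]; [auto|contradiction]].
      - intros a b ha [hb| ->] hn; [contradiction|right; auto]. }
    destruct (HM z' P' L') as [a _]; simpl in a. apply ny, a; auto. }
  exists R; split; [auto|split; [auto|split]].
  - intros x y; apply Ptot; auto.
  - intros G HG; apply Pl; auto.
Qed.
End Zermelo.

Lemma card_mono (F G : family) : card_le_c G -> (forall p, F p -> G p) -> card_le_c F.
Proof. intros [g Hg] H; exists g; intros p q hp hq; apply Hg; auto. Qed.

Lemma card_double (G : family) (h : NPU -> NPU) : card_le_c G ->
  card_le_c (fun y => exists x, G x /\ (y = x \/ y = h x)).
Proof.
  intros [g Hg].
  set (ch := fun y : NPU => epsilon (inhabits y) (fun x => G x /\ (y = x \/ y = h x))).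
  exists (fun y => fun k => match k with
     | 0 => if excluded_middle_informative (y = ch y) then true else false
     | S k => g (ch y) k end).
  intros y1 y2 H1 H2 E.
  assert (S1 := epsilon_spec (inhabits y1) _ H1). assert (S2 := epsilon_spec (inhabits y2) _ H2).
  cbv beta in S1, S2. fold (ch y1) in S1. fold (ch y2) in S2.
  assert (Ex : ch y1 = ch y2).
  { apply Hg; [apply S1|apply S2|]. apply functional_extensionality; intro k.
    exact (f_equal (fun e => e (S k)) E). }
  assert (E0 := f_equal (fun e => e 0) E); cbv beta iota in E0.
  destruct (excluded_middle_informative (y1 = ch y1)) as [a|a],
           (excluded_middle_informative (y2 = ch y2)) as [b|b]; try discriminate.
  - congruence.
  - destruct S1 as [_ [c|c]]; [contradiction|]. destruct S2 as [_ [d|d]]; [contradiction|].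
    congruence.
Qed.

Section Lex.
Variable W : NPU -> NPU -> Prop.
Hypothesis Wirr : forall x, ~ W x x.
Hypothesis Wtr : forall x y z, W x y -> W y z -> W x z.
Hypothesis Wtot : forall x y, W x y \/ x = y \/ W y x.
Hypothesis Wmin : forall G : family, (exists p, G p) -> exists m, G m /\ forall p, G p -> ~ W p m.

Lemma wo_lex (F : family) (k : NPU -> NPU) :
  (forall z, F z -> card_le_c (fun y => F y /\ (W (k y) (k z) \/ k y = k z))) -> card_le_c_plus F.
Proof.
  intro Hseg.
  exists (fun y z => W (k y) (k z) \/ (k y = k z /\ W y z)).
  split; [|split; [|split; [|split]]].
  - intros p _ [h|[_ h]]; eapply Wirr; eauto.
  - intros p q r _ _ _ [h1|[e1 h1]] [h2|[e2 h2]].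
    + left; eauto.
    + left; rewrite <- e2; auto.
    + left; rewrite e1; auto.
    + right; split; [congruence|eauto].
  - intros p q _ _. destruct (Wtot (k p) (k q)) as [h|[h|h]]; auto.
    destruct (Wtot p q) as [h'|[h'|h']]; auto.
  - intros G HG Hne.
    destruct (Wmin (fun a => exists y, G y /\ k y = a)) as [k0 [[y0 [Gy0 e0]] Hk0]].
    { destruct Hne as [p Gp]; exists (k p), p; auto. }
    destruct (Wmin (fun y => G y /\ k y = k0)) as [m [[Gm em] Hm]]; [eauto|].
    exists m; split; auto. intros p Gp [h|[e h]].
    + apply (Hk0 (k p)); [eauto|congruence].
    + apply (Hm p); [split; congruence|auto].
  - intros p Fp. apply card_mono with (1 := Hseg p Fp).
    intros q [Fq [h|[e _]]]; auto.
Qed.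
End Lex.

Lemma lb_mc F : maximal_chain F -> ~ card_le_c F.
Proof.
  intros [HC HM] Hc. destruct (upper_bound F Hc) as [q Hq].
  destruct (strict_above q) as [q' [h1 h2]].
  assert (Fq' : F q').
  { apply (HM (fun x => F x \/ x = q')); [|auto|auto].
    intros a b [ha| ->] [hb| ->]; auto.
    - left; apply RK_trans with q; auto.
    - right; apply RK_trans with q; auto.
    - left; apply RK_refl. }
  apply h2; auto.
Qed.

Lemma lb_unb F : unbounded F -> ~ card_le_c F.
Proof. intros HU Hc. destruct (upper_bound F Hc) as [q Hq]. destruct (HU q) as [r [Fr h]]. auto. Qed.

Lemma lb_icp F : incomparable_family F -> ~ card_le_c F.
Proof. intros HI Hc. destruct (upper_bound F Hc) as [q Hq]. destruct (HI q) as [r [Fr [h1 h2]]]. auto. Qed.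

Theorem mainTheorem19 :
  min_size_is_c_plus maximal_chain /\
  min_size_is_c_plus unbounded /\
  (icp_defined -> min_size_is_c_plus incomparable_family).
Proof.
  destruct (zermelo NPU) as [W [Wirr [Wtr [Wtot Wmin]]]].
  destruct (hausdorff NPU (fun _ => True) RK_le) as [C [[_ CC] CM]].
  assert (MC : maximal_chain C).
  { split; [exact CC|]. intros D HD HCD. apply CM; auto. split; auto. }
  set (rho := fun x : NPU => epsilon (inhabits x)
     (fun m => C m /\ RK_le x m /\ forall u, C u -> RK_le x u -> ~ W u m)).
  assert (Hrho : forall x, C x -> C (rho x) /\ RK_le x (rho x) /\ forall u, C u -> RK_le x u -> ~ W u (rho x)).
  { intros x Cx. apply (epsilon_spec (inhabits x)
       (fun m => C m /\ RK_le x m /\ forall u, C u -> RK_le x u -> ~ W u m)).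
    destruct (Wmin (fun m => C m /\ RK_le x m)) as [m [[Cm hm] Hm]].
    - exists x; split; auto; apply RK_refl.
    - exists m; split; auto. }
  assert (Hmono : forall y z, C y -> C z -> (W (rho y) (rho z) \/ rho y = rho z) -> RK_le (rho y) (rho z)).
  { intros y z Cy Cz [h|e]; [|rewrite e; apply RK_refl].
    destruct (Hrho y Cy) as [Cy' [hy _]]. destruct (Hrho z Cz) as [Cz' [hz Mz]].
    destruct (CC _ _ Cy' Cz') as [h'|h']; auto.
    exfalso; apply (Mz (rho y)); auto. apply RK_trans with (rho z); auto. }
  assert (CP : card_le_c_plus C).
  { apply (wo_lex W Wirr Wtr Wtot Wmin C rho). intros z Cz.
    apply card_mono with (1 := pred_le_c (rho z)).
    intros y [Cy h]. apply RK_trans with (rho y); [apply (Hrho y Cy)|apply Hmono; auto]. }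
  assert (UC : unbounded C).
  { intro p. apply NNPP; intro H. apply (lb_mc C MC).
    apply card_mono with (1 := pred_le_c p). intros q Cq.
    apply NNPP; intro h; apply H; eauto. }
  split; [|split].
  - split; [exists C; auto|exact lb_mc].
  - split; [exists C; auto|exact lb_unb].
  - intro Hicp. split; [|exact lb_icp].
    destruct (choice_fun (fun x y => ~ RK_le x y /\ ~ RK_le y x)) as [h Hh].
    { intro x; destruct (Hicp x) as [q [_ hq]]; eauto. }
    set (F := fun y => exists x, C x /\ (y = x \/ y = h x)).
    exists F; split.
    + intro p. destruct (classic (exists x, C x /\ ~ RK_le p x /\ ~ RK_le x p)) as [[x [Cx hx]]|hn].
      * exists x; split; auto. exists x; auto.
      * assert (Cp : C p).
        { apply ((proj2 MC) (fun x => C x \/ x = p)); [|auto|auto].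
          assert (cp : forall x, C x -> RK_le p x \/ RK_le x p).
          { intros x Cx. destruct (classic (RK_le p x)) as [e|e]; auto. right.
            apply NNPP; intro e'; apply hn; eauto. }
          intros a b [ha| ->] [hb| ->]; auto.
          - destruct (cp a ha); auto.
          - left; apply RK_refl. }
        exists (h p); split; [exists p; auto|]. destruct (Hh p); auto.
    + set (ch := fun y : NPU => epsilon (inhabits y) (fun x => C x /\ (y = x \/ y = h x))).
      assert (Hch : forall y, F y -> C (ch y) /\ (y = ch y \/ y = h (ch y))).
      { intros y Fy. exact (epsilon_spec (inhabits y) (fun x => C x /\ (y = x \/ y = h x)) Fy). }
      apply (wo_lex W Wirr Wtr Wtot Wmin F (fun y => rho (ch y))). intros z Fz.
      apply card_mono with (1 := card_double _ h (pred_le_c (rho (ch z)))).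
      intros y [Fy hy]. exists (ch y). destruct (Hch y Fy) as [Cy e]. split; auto.
      apply RK_trans with (rho (ch y)); [apply (Hrho _ Cy)|].
      apply Hmono; auto. apply (Hch z Fz).
Qed.
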